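(* Let $G$ be a group, $F$ a field of characteristic $0$, and let $R=M_n(F)$ carry an elementary $G$-grading (induced by an arbitrary tuple $(g_1,\dots,g_n)\in G^n$). If $m=x_1x_2\cdots x_k$ is a multilinear graded monomial which is a graded identity of $R$ and $k>n$, then there is a graded monomial identity $N$ of $R$ of length at most $n$ such that $m$ belongs to the $T_G$-ideal generated by $N$. Consequently, all graded monomial identities of $R$ follow from those of length at most $n$.
   Context: The elementary $G$-grading on $M_n(F)$ induced by $(g_1,\dots,g_n)\in G^n$ is $R=\bigoplus_g R_g$ with $R_g=\mathrm{span}\{e_{pq}: g_p^{-1}g_q=g\}$. Graded polynomials live in the free $G$-graded algebra on a set of variables each having a prescribed degree in $G$; a graded polynomial is a graded identity of $R$ if it vanishes under every substitution of each variable $x$ by an element of $R_{\deg x}$. The length of a monomial is its usual degree (number of variables counted with multiplicity). A $T_G$-ideal is an ideal of the free $G$-graded algebra invariant under all endomorphisms preserving the degrees of variables. *)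

(* Defs.v *)
From HB Require Import structures.
From mathcomp Require Import all_boot all_order all_algebra.
Set Implicit Arguments. Unset Strict Implicit. Unset Printing Implicit Defensive.
Import GRing.Theory.

Section FreeGraded.
Variables (G : groupType) (F : fieldType).

(* Variables of the free G-graded algebra: countably many of each degree.
   The variable (g, i) has degree g. *)
Definition var := (G * nat)%type.
Definition vdeg (x : var) : G := x.1.

Definition word := seq var.
Definition wdeg (w : word) : G := foldr (fun x acc => (vdeg x * acc)%g) 1%g w.

(* Graded polynomials, represented as formal finite sums of (coefficient, monomial).
   The polynomial represented is the coefficient function [coef p]. *)
Definition poly := seq (F * word).
Definition coef (p : poly) (w : word) : F := \sum_(t <- p | t.2 == w) t.1.
Definition pmono (w : word) : poly := [:: (1%R, w)].
Definition pone : poly := pmono [::].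
Definition pscale (c : F) (p : poly) : poly := [seq (c * t.1, t.2)%R | t <- p].
Definition pmul (p q : poly) : poly := [seq (t.1 * u.1, t.2 ++ u.2)%R | t <- p, u <- q].

Definition psubst (phi : var -> poly) (p : poly) : poly :=
  flatten [seq pscale t.1 (foldr (fun x acc => pmul (phi x) acc) pone t.2) | t <- p].

Definition graded_subst (phi : var -> poly) : Prop :=
  forall x w, coef (phi x) w != 0%R -> wdeg w = vdeg x.

Definition TG_ideal (I : (word -> F) -> Prop) : Prop :=
  [/\ I (coef [::]),
      (forall p q, I (coef p) -> I (coef q) -> I (coef (p ++ q))),
      (forall c p, I (coef p) -> I (coef (pscale c p))),
      (forall a p b, I (coef p) -> I (coef (pmul a (pmul p b)))) &
      (forall phi, graded_subst phi -> forall p, I (coef p) -> I (coef (psubst phi p)))].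

Definition in_TG_gen (S : word -> Prop) (f : word -> F) : Prop :=
  forall I, TG_ideal I -> (forall N, S N -> I (coef (pmono N))) -> I f.

Definition in_elem_comp (n : nat) (g : 'I_n -> G) (h : G) (A : 'M[F]_n) : Prop :=
  forall p q, A p q != 0%R -> ((g p)^-1 * g q)%g = h.

Definition evalw (n : nat) (r : var -> 'M[F]_n) (w : word) : 'M[F]_n :=
  foldr (fun x acc => (r x *m acc)%R) (1%:M)%R w.
Definition evalp (n : nat) (r : var -> 'M[F]_n) (p : poly) : 'M[F]_n :=
  \sum_(t <- p) t.1 *: evalw r t.2.

Definition graded_id (n : nat) (g : 'I_n -> G) (p : poly) : Prop :=
  forall r : var -> 'M[F]_n, (forall x, in_elem_comp g (vdeg x) (r x)) -> evalp r p = 0%R.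

End FreeGraded.

(* Main.v *)
Require Import Defs.
From HB Require Import structures.
From mathcomp Require Import all_boot all_order all_algebra zify.
Set Implicit Arguments. Unset Strict Implicit. Unset Printing Implicit Defensive.
Import GRing.Theory.

Section Proof.
Variables (G : groupType) (F : fieldType) (n : nat) (g : 'I_n -> G).

Definition Sg (b : G) : bool := [exists p : 'I_n, g p == b].
Definition good (a : G) (w : word G) : bool :=
  all (fun i => Sg (a * wdeg (take i w))%g) (iota 0 (size w).+1).

Lemma wdeg_cat (u v : word G) : wdeg (u ++ v) = (wdeg u * wdeg v)%g.
Proof. by elim: u => /= [|x u ->]; rewrite ?mul1g ?mulgA. Qed.

Lemma Sg_g p : Sg (g p). Proof. by apply/existsP; exists p. Qed.

Lemma good_nil a : good a [::] = Sg a.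
Proof. by rewrite /good /= mulg1 andbT. Qed.

Lemma good_cons a x w : good a (x :: w) = Sg a && good (a * vdeg x)%g w.
Proof.
rewrite /good /= mulg1; congr (_ && _).
rewrite -add1n iotaDl all_map mulgA; congr (_ && _); apply: eq_all => i /=.
by rewrite mulgA.
Qed.

Lemma good_Sg a w : good a w -> Sg a.
Proof. by case: w => [|x w]; rewrite ?good_nil // good_cons => /andP []. Qed.

Lemma evalw_cons (r : var G -> 'M[F]_n) x w : evalw r (x :: w) = (r x *m evalw r w)%R.
Proof. by []. Qed.

Lemma claimA (r : var G -> 'M[F]_n) : (forall x, in_elem_comp g (vdeg x) (r x)) ->
  forall w p q, evalw r w p q != 0%R -> good (g p) w.
Proof.
move=> Hr; elim=> [|x w IH] p q.
  by move=> _; rewrite good_nil Sg_g.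
rewrite evalw_cons mxE => H.
case: (pickP (fun j => r x p j * evalw r w j q != 0)%R) => [j Hj | H0]; last first.
  by move: H; rewrite big1 ?eqxx // => j _; move/negbFE: (H0 j) => /eqP.
move: Hj; rewrite mulf_eq0 negb_or => /andP [H1 H2].
have gj : g j = (g p * vdeg x)%g by rewrite -(Hr x p j H1) mulgA mulgV mul1g.
by rewrite good_cons Sg_g -gj (IH _ _ H2).
Qed.

Definition r0 (x : var G) : 'M[F]_n :=
  \matrix_(p, q) ((((g p)^-1 * g q)%g == vdeg x) : nat)%:R%R.

Lemma natr_sumI (k : nat) (f : 'I_k -> nat) :
  (((\sum_i f i)%N)%:R = \sum_i (f i)%:R :> F)%R.
Proof. exact: (big_morph _ (natrD F) (erefl _)). Qed.

Lemma claimB w : exists C : 'I_n -> 'I_n -> nat,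
  (forall p q, evalw r0 w p q = (C p q)%:R%R) /\
  (forall p, good (g p) w -> exists q, 0 < C p q).
Proof.
elim: w => [|x w [C [HC HP]]].
  exists (fun p q => nat_of_bool (p == q)); split.
    by move=> p q; rewrite /evalw /= mxE.
  by move=> p _; exists p; rewrite eqxx.
exists (fun p q => \sum_j (((((g p)^-1 * g j)%g == vdeg x) : nat) * C j q))%N; split.
  move=> p q; rewrite evalw_cons mxE natr_sumI; apply: eq_bigr => j _.
  by rewrite mxE HC natrM.
move=> p; rewrite good_cons => /andP [_ Hgw].
have /existsP [j /eqP gj] := good_Sg Hgw.
have [q Hq] : exists q, 0 < C j q by apply: HP; rewrite gj.
exists q; rewrite (bigD1 j) //= gj mulKg eqxx mul1n.
exact: ltn_addr.
Qed.

Lemma evalp_pmono (r : var G -> 'M[F]_n) w : evalp r (pmono F w) = evalw r w.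
Proof. by rewrite /evalp /pmono big_seq1 scale1r. Qed.

Lemma id_iff w : [pchar F]%R =i pred0 ->
  graded_id g (pmono F w) <-> (forall p, ~~ good (g p) w).
Proof.
move=> Hc; split.
  move=> Hid p; apply/negP => Hg.
  have Hr : forall x, in_elem_comp g (vdeg x) (r0 x).
    move=> x p' q'; rewrite mxE.
    by case: (eqVneq ((g p')^-1 * g q')%g (vdeg x)) => //= _; rewrite eqxx.
  have := Hid r0 Hr; rewrite evalp_pmono => H0.
  have [C [HC HP]] := claimB w.
  have [q Hq] := HP p Hg.
  have := HC p q; rewrite H0 mxE => /esym/eqP.
  by rewrite (proj1 (pcharf0P F) Hc) => /eqP Hz; rewrite Hz in Hq.
move=> Hng r Hr; rewrite evalp_pmono; apply/matrixP => p q; rewrite mxE.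
case: (eqVneq (evalw r w p q) 0%R) => // /(claimA Hr) H.
by move: (Hng p); rewrite H.
Qed.


Lemma coef_pmono (s w : word G) : coef (pmono F s) w != 0%R -> s = w.
Proof.
rewrite /coef /pmono big_cons big_nil /=.
by case: (eqVneq s w) => // _; rewrite eqxx.
Qed.

Lemma pmul_pmono (a b : word G) : pmul (pmono F a) (pmono F b) = pmono F (a ++ b).
Proof. by rewrite /pmul /pmono /= mulr1. Qed.

Lemma foldr_pmono (f : var G -> word G) w :
  foldr (fun x acc => pmul (pmono F (f x)) acc) (pone G F) w = pmono F (flatten (map f w)).
Proof. by elim: w => //= x w ->; rewrite pmul_pmono. Qed.

Lemma psubst_pmono (f : var G -> word G) w :
  psubst (fun x => pmono F (f x)) (pmono F w) = pmono F (flatten (map f w)).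
Proof. by rewrite /psubst /= foldr_pmono /pscale /pmono /= mulr1. Qed.

Lemma in_TG_trans (A B C : word G) :
  in_TG_gen (fun N => N = B) (coef (pmono F A)) ->
  in_TG_gen (fun N => N = C) (coef (pmono F B)) ->
  in_TG_gen (fun N => N = C) (coef (pmono F A)).
Proof.
move=> HA HB I HI HC; apply: (HA I HI) => N ->; exact: HB.
Qed.

Lemma snd_le_sumn (s : seq (var G)) t : t \in s -> t.2 <= sumn (map snd s).
Proof.
elim: s => //= a s IH; rewrite inE => /orP [/eqP -> | /IH]; first exact: leq_addr.
by move=> H; apply: (leq_trans H); apply: leq_addl.
Qed.

Lemma flatten_id (z : var G) (f : var G -> word G) (s : word G) :
  (forall t, t != z -> f t = [:: t]) -> z \notin s -> flatten (map f s) = s.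
Proof.
move=> Hf; elim: s => //= a s IH; rewrite inE negb_or => /andP [Ha Hs].
by rewrite Hf ?(eq_sym a) // IH.
Qed.

Lemma comb_step m : (forall p, ~~ good (g p) m) -> n < size m ->
  exists m', size m' = (size m).-1 /\ (forall p, ~~ good (g p) m') /\
    in_TG_gen (fun N => N = m') (coef (pmono F m)).
Proof.
move=> Hng Hsz.
pose k := size m.
have HW : forall p, exists i : 'I_k.+1, ~~ Sg (g p * wdeg (take i m))%g.
  move=> p; have /allPn [i Hi Hn] := Hng p.
  rewrite mem_iota /= in Hi; exists (Ordinal Hi); exact: Hn.
pose W p := odflt ord0 [pick i : 'I_k.+1 | ~~ Sg (g p * wdeg (take i m))%g].
have HWp : forall p, ~~ Sg (g p * wdeg (take (W p) m))%g.
  move=> p; rewrite /W; case: pickP => [i Hi | H0] //=.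
  by have [i Hi] := HW p; move: (H0 i); rewrite Hi.
have HW0 : forall p, W p != ord0.
  by move=> p; apply/eqP => E; move: (HWp p); rewrite E /= take0 /= mulg1 Sg_g.
have [j Hj0 HjW] : exists2 j : 'I_k.+1, j != ord0 & forall p, W p != j.
  case: (boolP [exists j : 'I_k.+1, (j != ord0) && [forall p, W p != j]]).
    by move=> /existsP [j /andP [Hj /forallP HW']]; exists j.
  move=> Hno; exfalso.
  have Hsub : [set~ (ord0 : 'I_k.+1)] \subset [set W p | p : 'I_n].
    apply/subsetP => j; rewrite !inE => Hj.
    move/existsPn: Hno => /(_ j); rewrite Hj /= => /forallPn [p /negPn /eqP <-].
    by apply/imsetP; exists p.
  have := subset_leq_card Hsub; rewrite cardsC1 card_ord /=.
  move=> H; have := leq_trans H (leq_imset_card _ _).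
  by rewrite card_ord leqNgt Hsz.
have Hjk : j <= k by rewrite -ltnS.
have Hj1 : 0 < j by rewrite lt0n; apply: contra Hj0 => /eqP Hj; apply/eqP; apply: val_inj.
have HWj : forall p, (W p : nat) != j by move=> p; apply: contra (HjW p) => /eqP H; apply/eqP; apply: val_inj.
have HWk : forall p, W p <= k by move=> p; rewrite -ltnS.
have HW1 : forall p, 0 < W p by move=> p; rewrite lt0n; apply: contra (HW0 p) => /eqP Hj; apply/eqP; apply: val_inj.
case: (ltngtP j k) Hjk => // [Hlt | Heq] _.
- (* merge letters j and j+1 *)
  have [u [x [y [v [Em Hu]]]]] : exists u x y v, m = u ++ x :: y :: v /\ size u = j.-1.
    exists (take j.-1 m).
    case E: (drop j.-1 m) => [|x [|y v]].
    + by move: (size_drop j.-1 m); rewrite E /= -/k => H; lia.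
    + by move: (size_drop j.-1 m); rewrite E /= -/k => H; lia.
    exists x, y, v; split; first by rewrite -E cat_take_drop.
    rewrite size_take -/k; case: ifP => //; lia.
  pose z : var G := ((vdeg x * vdeg y)%g, (sumn (map snd (u ++ v))).+1).
  have Hz : z \notin u ++ v.
    by apply/negP => /snd_le_sumn; rewrite /= ltnn.
  exists (u ++ z :: v); split; [|split].
  + rewrite Em !size_cat /=; lia.
  + move=> p; rewrite /good; apply/allPn.
    have Hi := HWp p; have Hne := HWj p; have Hik := HWk p.
    move: (nat_of_ord (W p)) Hi Hne Hik => i Hi Hne Hik; rewrite /k Em in Hik; rewrite Em in Hi.
    case: (leqP i (size u)) => Hiu.
    * exists i; first by rewrite mem_iota /= ltnS size_cat /=; apply: (leq_trans Hiu); apply: leq_addr.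
      by move: Hi; rewrite !takel_cat.
    * have [t Et] : exists t, i = (size u + t.+2)%N.
        exists (i - (size u).+2); rewrite addnS addnS -addSn -addSn subnKC //.
        rewrite ltn_neqAle Hiu andbT; apply: contra Hne => /eqP <-.
        by rewrite Hu; move: Hj1; case: (j : nat).
      exists (size u + t.+1)%N.
        rewrite mem_iota /= ltnS size_cat /= leq_add2l.
        by move: Hik; rewrite Et size_cat /= leq_add2l.
      move: Hi; rewrite Et !take_cat ltnNge leq_addr /= ltnNge leq_addr /= !addKn /=.
      by rewrite !wdeg_cat /= !mulgA.
  + pose f := fun t : var G => if t == z then [:: x; y] else [:: t].
    move=> I [H0 Hadd Hsc Hmul Hsub] HN.
    have Hgs : graded_subst (fun t => pmono F (f t)).
      move=> t w /coef_pmono <-; rewrite /f.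
      by case: (eqVneq t z) => [-> | _] /=; rewrite ?mulg1.
    have := Hsub _ Hgs _ (HN _ erefl).
    have fz : f z = [:: x; y] by rewrite /f eqxx.
    rewrite psubst_pmono map_cat flatten_cat /= fz.
    have Hf : forall t, t != z -> f t = [:: t] by move=> t Ht; rewrite /f (negbTE Ht).
    rewrite (flatten_id Hf) ?(flatten_id Hf) ?Em //.
    * by apply: contra Hz; rewrite mem_cat => ->; rewrite orbT.
    * by apply: contra Hz; rewrite mem_cat => ->.
- (* drop the last letter *)
  case/lastP E: m Hsz Hng HWp HWk HWj Heq => [|s x] //= Hsz Hng HWp HWk HWj Heq.
  exists s; split; [by rewrite size_rcons | split].
  + move=> p; rewrite /good; apply/allPn.
    have Hk : k = (size s).+1 by rewrite /k E size_rcons.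
    have Hws : W p <= size s.
      have H1 := HWk p; have H2 := HWj p; lia.
    exists (nat_of_ord (W p)); first by rewrite mem_iota /= ltnS.
    by move: (HWp p); rewrite -cats1 takel_cat.
  + move=> I [H0 Hadd Hsc Hmul Hsub] HN.
    have := Hmul (pone G F) (pmono F s) (pmono F [:: x]) (HN _ erefl).
    by rewrite pmul_pmono /pone pmul_pmono cats1.
Qed.

End Proof.

Theorem mainTheorem4 (G : groupType) (F : fieldType) (n : nat) (g : 'I_n -> G) :
  [pchar F]%R =i pred0 ->
  (forall m : word G,
      uniq m -> n < size m -> graded_id g (pmono F m) ->
      exists N : word G,
        size N <= n /\ graded_id g (pmono F N) /\
        in_TG_gen (fun N' => N' = N) (coef (pmono F m))) /\
  (forall m : word G,
      graded_id g (pmono F m) ->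
      in_TG_gen (fun N => size N <= n /\ graded_id g (pmono F N)) (coef (pmono F m))).
Proof.
move=> Hc.
have step : forall k (m : word G), size m <= k + n -> (forall p, ~~ good g (g p) m) ->
    n < size m -> exists N : word G, size N <= n /\ (forall p, ~~ good g (g p) N) /\
    in_TG_gen (fun N' => N' = N) (coef (pmono F m)).
  elim=> [|k IH] m Hs Hng Hn; first by move: Hs Hn; rewrite add0n => H1 H2; lia.
  have [m' [Hs' [Hng' Htg]]] := comb_step F Hng Hn.
  case: (leqP (size m') n) => Hm'; first by exists m'.
  have [|N [HN1 [HN2 HN3]]] := IH m' _ Hng' Hm'; first by rewrite Hs'; lia.
  by exists N; split => //; split => //; apply: in_TG_trans Htg HN3.
have P1 : forall m : word G, n < size m -> graded_id g (pmono F m) ->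
      exists N : word G, size N <= n /\ graded_id g (pmono F N) /\
        in_TG_gen (fun N' => N' = N) (coef (pmono F m)).
  move=> m Hn Hid; have Hng := (id_iff g m Hc).1 Hid.
  have [N [HN1 [HN2 HN3]]] := step (size m) m (leq_addr _ _) Hng Hn.
  by exists N; split => //; split => //; apply/(id_iff g N Hc).
split; first by move=> m _; apply: P1.
move=> m Hid; case: (leqP (size m) n) => Hs.
  by move=> I HI HS; apply: HS.
have [N [HN1 [HN2 HN3]]] := P1 m Hs Hid.
by move=> I HI HS; apply: (HN3 I HI) => N' ->; apply: HS.
Qed.
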